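(* Under the hypotheses of the continuity-in-pretrained-model result (Assumption 1, the uniform Lipschitz condition $\|T^Y_0(x_1,y_1)-T^Y_0(x_2,y_2)\|_{\mathcal{Y}_T}\le L(\|x_1-x_2\|_{\mathcal{X}_T}+\|y_1-y_2\|_{\mathcal{Y}_S})$ for all $T^Y_0\in\mathbb{T}^Y_0$, and the bound $|\mathcal{E}^O(h_1)-\mathcal{E}^O(h_2)|\le L'\mathcal{W}_p(h_1\#Law(X_T),h_2\#Law(X_T))^p$ for all intermediate models $h_1,h_2$, for some $L'>0,p\ge1$), the transfer risk $S\mapsto\mathcal{C}(S)$ is continuous on the metric space $(\mathcal{S},d_S)$, where $d_S((\mu_1,f_1),(\mu_2,f_2))=D(\mu_1,\mu_2)+d_M(f_1,f_2)$.
   Context: Transfer learning framework. A source task $S$ consists of an input space $\mathcal{X}_S$ and output space $\mathcal{Y}_S$ (finite-dimensional normed spaces), a random pair $(X_S,Y_S)$, a set $A_S$ of admissible models $f:\mathcal{X}_S\to\mathcal{Y}_S$ and a pretrained model $f_S^*\in A_S$. A target task $T$ has analogous $\mathcal{X}_T,\mathcal{Y}_T,(X_T,Y_T),A_T$ and optimal target model $f_T^*$. Fixed sets $\mathbb{T}^X_0$ of maps $\mathcal{X}_T\to\mathcal{X}_S$ and $\mathbb{T}^Y_0$ of maps $\mathcal{X}_T\times\mathcal{Y}_S\to\mathcal{Y}_T$ are given. For $(T^X_0,T^Y_0)$ the intermediate model is $f_{ST}(x)=T^Y_0(x,f_S^*(T^X_0(x)))$; $\mathbb{P}_T=Law(f_T^*(X_T))$,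 $\mathbb{P}_{ST}=Law(f_{ST}(X_T))$. An output transport risk is $\mathcal{E}^O:A_T\to\mathbb{R}$ with $\mathcal{E}^O\ge0$ and $\mathcal{E}^O(f_{ST})=0$ iff $\mathbb{P}_{ST}=\mathbb{P}_T$. An input transport risk $\mathcal{E}^I$ satisfies $\mathcal{E}^I(T^X_0)\ge0$, with equality iff $T^X_0\#Law(X_T)=Law(X_S)$. The model-specific transfer risk is $\mathcal{C}(S,T\mid f_{ST})=C(\mathcal{E}^O(f_{ST}),\mathcal{E}^I(T^X_0))$, with $C:\mathbb{R}^2\to\mathbb{R}$, $C(0,0)=0$, $C\ge0$ on relevant values, non-decreasing in each argument, and $|C(a,b)-C(a',b')|\le L_C(|a-a'|+|b-b'|)$ for some $L_C>0$. The transfer risk is $\mathcal{C}(S,T)=\inf_{(T^X_0,T^Y_0)\in\mathbb{T}^X_0\times\mathbb{T}^Y_0}\mathcal{C}(S,T\mid f_{ST})$. With target and transport sets fixed, a source task is $S=(\mu,f)\in\mathcal{S}\subset\mathcal{P}(\mathcal{X}_S)\times A_S$ ($\mu=Law(X_S)$, $f=f_S^*$) and $\mathcal{C}(S)=\mathcal{C}(\mu,f):=\mathcal{C}(S,T)$. Assumption 1: $D$ is a metric on $\mathcal{P}(\mathcal{X}_S)$ and $\mathcal{E}^I(T^X_0)=D(T^X_0\#Law(X_T),\mu)$. For a fixed constant $M>0$, $d_M(f_1,f_2):=\min\{M,\sup_{x\in\mathcal{X}_S}\|f_1(x)-f_2(x)\|_{\mathcal{Y}_S}\}$. $\mathcal{W}_p$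 is the $p$-Wasserstein distance on probability measures on $\mathcal{Y}_T$. *)

(* Defs.v *)
From HB Require Import structures.
From mathcomp Require Import all_boot all_order all_algebra.
From mathcomp Require Import all_classical all_reals all_analysis.
Set Implicit Arguments.
Unset Strict Implicit.
Unset Printing Implicit Defensive.
Import Order.TTheory GRing.Theory Num.Theory.
Import numFieldNormedType.Exports.
Local Open Scope classical_set_scope.
Local Open Scope ring_scope.

Section TransferDefs.
Variable R : realType.

Definition findim (V : normedModType R) : Prop :=
  exists (n : nat) (g : V -> 'rV[R]_n), linear g /\ bijective g.

Definition borelT (V : normedModType R) := g_sigma_algebraType (@open V).

Definition measfun (V : normedModType R) := set (borelT V) -> \bar R.

Definition is_prob (V : normedModType R) (m : measfun V) : Prop :=
  m set0 = 0%E /\ (forall A, measurable A -> (0 <= m A)%E) /\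
  semi_sigma_additive m /\ m setT = 1%E.

Definition push (V W : normedModType R) (P : measfun V) (h : V -> W) : measfun W :=
  @pushforward _ _ (borelT V) (borelT W) R P h.

Definition couplings (Y : normedModType R) (nu1 nu2 : measfun Y) :
  set (probability (borelT Y * borelT Y)%type R) :=
  [set pi | forall A : set (borelT Y), measurable A ->
     pi (A `*` setT) = nu1 A /\ pi (setT `*` A) = nu2 A].

Definition Wasserstein (Y : normedModType R) (p : R) (nu1 nu2 : measfun Y) : \bar R :=
  poweR (ereal_inf [set (\int[pi]_z (powR `|(z.1 : Y) - (z.2 : Y)| p)%:E)%E
                   | pi in couplings nu1 nu2]) p^-1.

Definition dM (XS YS : normedModType R) (M : R) (f1 f2 : XS -> YS) : R :=
  fine (Order.min M%:E (ereal_sup (range (fun x => (`|f1 x - f2 x|)%:E)))).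

Definition fST (XT XS YS YT : normedModType R) (f : XS -> YS) (TX : XT -> XS)
  (TY : XT * YS -> YT) : XT -> YT := fun x => TY (x, f (TX x)).

Definition transfer_risk (XT XS YS YT : normedModType R)
  (C : R -> R -> R) (EO : (XT -> YT) -> R) (D : measfun XS -> measfun XS -> R)
  (PXT : measfun XT) (TXs : set (XT -> XS)) (TYs : set (XT * YS -> YT))
  (s : measfun XS * (XS -> YS)) : R :=
  inf [set r | exists2 TX, TXs TX & exists2 TY, TYs TY &
               r = C (EO (fST s.2 TX TY)) (D (push PXT TX) s.1)].

End TransferDefs.

(* Main.v *)
Require Import Defs.
From HB Require Import structures.
From mathcomp Require Import all_boot all_order all_algebra.
From mathcomp Require Import all_classical all_reals all_analysis.
From mathcomp Require Import ring lra.
Import Order.TTheory GRing.Theory Num.Theory.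
Import numFieldNormedType.Exports.
Local Open Scope classical_set_scope.
Local Open Scope ring_scope.

Section H.
Context {R : realType}.

Lemma prob_push (V W : normedModType R) (P : probability (borelT V) R) (h : V -> W)
  (mh : measurable_fun setT (h : borelT V -> borelT W)) : is_prob (push P h).
Proof.
pose hp : {mfun borelT V >-> borelT W} := HB.pack (h : borelT V -> borelT W) (isMeasurableFun.Build _ _ _ _ _ mh).
have -> : push P h = distribution P hp by [].
split; first exact: measure0.
split; first by move=> A _; exact: measure_ge0.
split; first exact: measure_semi_sigma_additive.
exact: probability_setT.
Qed.

Import HBNNSimple.

Lemma int_push_bound d1 d2 (X : measurableType d1) (Y : measurableType d2)
  (P : probability X R) (phi : {mfun X >-> Y}) (g : Y -> \bar R)
  (g0 : forall y, (0 <= g y)%E) (c : R) (hc : forall x, (g (phi x) <= c%:E)%E) :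
  (\int[distribution P phi]_y g y <= c%:E)%E.
Proof.
rewrite ge0_integralTE //.
apply: ge_ereal_sup => _ [h hle <-].
rewrite -integralT_nnsfun.
rewrite ge0_integral_pushforward //; last first.
  by move=> y _; rewrite lee_fin.
  exact/measurable_realfun.measurable_EFinP/measurable_funP.
rewrite preimage_setT.
apply: (@le_trans _ _ (\int[P]_x (cst c%:E) x)%E).
  apply: ge0_le_integral => //.
  - by move=> x _; rewrite /= lee_fin.
  - apply/measurable_realfun.measurable_EFinP; apply: measurableT_comp => //.
  - by move=> x _; apply: le_trans (hle _) (hc _).
rewrite integral_cst //. rewrite [X in (_ * X <= _)%E](_ : _ = 1%E) ?mule1 //; exact: probability_setT. Qed.

Lemma W_bound (X Y : normedModType R) (P : probability (borelT X) R) (h1 h2 : X -> Y)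
  (m1 : measurable_fun setT (h1 : borelT X -> borelT Y))
  (m2 : measurable_fun setT (h2 : borelT X -> borelT Y))
  (p : R) (p0 : 0 < p) (c : R) (c0 : 0 <= c) (hc : forall x, `|h1 x - h2 x| <= c) :
  (poweR (Wasserstein p (push P h1) (push P h2)) p <= (powR c p)%:E)%E.
Proof.
pose phi := (fun x => (h1 x, h2 x)) : borelT X -> (borelT Y * borelT Y)%type.
have mphi : measurable_fun setT phi by exact: measurable_fun_pair.
pose pp : {mfun borelT X >-> (borelT Y * borelT Y)%type} :=
  HB.pack phi (isMeasurableFun.Build _ _ _ _ _ mphi).
pose pi : probability _ R := distribution P pp.
have cpl : couplings (push P h1) (push P h2) pi.
  move=> A mA; split; rewrite /= /distribution /pushforward /push /pushforward;
  congr (P _); apply/funext => x; apply/propext; rewrite /preimage /setX /=;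
  split => [[]|] //.
rewrite /Wasserstein; set S := (X in ereal_inf X).
have Sge0 : forall y, S y -> (0 <= y)%E.
  by move=> _ [q _ <-]; apply: integral_ge0 => z _; rewrite lee_fin powR_ge0.
have Sle : (ereal_inf S <= (powR c p)%:E)%E.
  apply: (@le_trans _ _ (\int[pi]_z (powR `|(z.1 : Y) - (z.2 : Y)| p)%:E)%E).
    by apply: ereal_inf_lbound; exists pi.
  apply: int_push_bound.
    by move=> z; rewrite lee_fin powR_ge0.
  move=> x; rewrite lee_fin /=.
  by apply: (ge0_ler_powR (ltW p0)) => //; rewrite nnegrE...
have S0 : (0 <= ereal_inf S)%E by apply: le_ereal_inf_tmp => y Sy; exact: Sge0.
rewrite -poweRrM mulVf ?gt_eqF // poweRe1 //.
Qed.

Lemma inf_close (I J : Type) (P : I -> Prop) (Q : J -> Prop) (a b : I -> J -> R)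
  (K : R) (K0 : 0 <= K)
  (a0 : forall i j, P i -> Q j -> 0 <= a i j) (b0 : forall i j, P i -> Q j -> 0 <= b i j)
  (hab : forall i j, P i -> Q j -> `|a i j - b i j| <= K) :
  `|inf [set r | exists2 i, P i & exists2 j, Q j & r = a i j] -
    inf [set r | exists2 i, P i & exists2 j, Q j & r = b i j]| <= K.
Proof.
set A := [set r | _]; set B := [set r | _].
have [[i Pi [j Qj]]|ne] := pselect (exists2 i, P i & exists j, Q j); last first.
  have A0 : A = set0.
    by apply/seteqP; split => // r [i Pi [j Qj _]]; exfalso; apply: ne; exists i => //; exists j.
  have B0 : B = set0.
    by apply/seteqP; split => // r [i Pi [j Qj _]]; exfalso; apply: ne; exists i => //; exists j.
  by rewrite A0 B0 subrr normr0.
have lA : has_lbound A by exists 0 => r [i' Pi' [j' Qj' ->]]; exact: a0.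
have lB : has_lbound B by exists 0 => r [i' Pi' [j' Qj' ->]]; exact: b0.
have nA : A !=set0 by exists (a i j); exists i => //; exists j.
have nB : B !=set0 by exists (b i j); exists i => //; exists j.
rewrite ler_distl; apply/andP; split.
- apply: lb_le_inf => // r [i' Pi' [j' Qj' ->]].
  rewrite lerBlDr.
  apply: (@le_trans _ _ (b i' j')); first by apply: ge_inf => //; exists i' => //; exists j'.
  by have := hab _ _ Pi' Qj'; rewrite ler_distl => /andP[+ _]; rewrite lerBlDr.
- rewrite -lerBlDr; apply: lb_le_inf => // r [i' Pi' [j' Qj' ->]].
  rewrite lerBlDr.
  apply: (@le_trans _ _ (a i' j')); first by apply: ge_inf => //; exists i' => //; exists j'.
  by have := hab _ _ Pi' Qj'; rewrite ler_distl => /andP[_].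
Qed.

Lemma dM_props (XS YS : normedModType R) (M : R) (M0 : 0 < M) (f1 f2 : XS -> YS) :
  0 <= dM M f1 f2 /\ (dM M f1 f2 < M -> forall x, `|f1 x - f2 x| <= dM M f1 f2).
Proof.
rewrite /dM; set s := ereal_sup _.
have sub x : ((`|f1 x - f2 x|)%:E <= s)%E by apply: ereal_sup_ubound; exists x.
have s0 : (0 <= s)%E by apply: le_trans (sub 0); rewrite lee_fin.
have [Ms|sM] := leP (M%:E) s.
  split; first exact: ltW.
  by rewrite ltxx.
idtac.
have sf : s \is a fin_num by rewrite ge0_fin_numE // (lt_trans sM) // ltry.
split; first by rewrite fine_ge0.
by move=> _ x; rewrite -lee_fin fineK.
Qed.

Lemma mfST (XT XS YS YT : normedModType R) (f : XS -> YS) (TX : XT -> XS)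
  (TY : XT * YS -> YT)
  (mf : measurable_fun setT (f : borelT XS -> borelT YS))
  (mX : measurable_fun setT (TX : borelT XT -> borelT XS))
  (mY : measurable_fun setT (TY : (borelT XT * borelT YS)%type -> borelT YT)) :
  measurable_fun setT (fST f TX TY : borelT XT -> borelT YT).
Proof.
apply: (measurableT_comp mY).
have h1 := measurableT_comp mf mX.
have h2 := measurable_fun_pair (@measurable_id _ (borelT XT) setT) h1.
exact h2.
Qed.

Lemma D_close (T : Type) (D : T -> T -> R) (isp : T -> Prop)
  (D_sym : forall m1 m2, isp m1 -> isp m2 -> D m1 m2 = D m2 m1)
  (D_tri : forall m1 m2 m3, isp m1 -> isp m2 -> isp m3 -> D m1 m3 <= D m1 m2 + D m2 m3)
  n m1 m2 : isp n -> isp m1 -> isp m2 -> `|D n m1 - D n m2| <= D m1 m2.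
Proof.
move=> pn p1 p2; rewrite ler_distl; apply/andP; split.
  rewrite lerBlDr addrC; apply: le_trans (D_tri _ _ _ pn p1 p2) _.
  by rewrite addrC.
apply: le_trans (D_tri _ _ _ pn p2 p1) _.
by rewrite (D_sym m2 m1).
Qed.
End H.

Theorem mainTheorem4 (R : realType) (XT XS YS YT : normedModType R)
  (fdXT : findim XT) (fdXS : findim XS) (fdYS : findim YS) (fdYT : findim YT)
  (PXT : probability (borelT XT) R)
  (TXs : set (XT -> XS)) (TYs : set (XT * YS -> YT))
  (AS : set (XS -> YS)) (AT : set (XT -> YT)) (fT : XT -> YT)
  (Sset : set (measfun XS * (XS -> YS)))
  (D : measfun XS -> measfun XS -> R) (EO : (XT -> YT) -> R) (C : R -> R -> R)
  (LC L L' p M : R)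
  (* measurability of the maps involved (so that all laws are well defined) *)
  (mTX : forall TX, TXs TX -> measurable_fun setT (TX : borelT XT -> borelT XS))
  (mTY : forall TY, TYs TY ->
     measurable_fun setT (TY : (borelT XT * borelT YS)%type -> borelT YT))
  (mAS : forall f, AS f -> measurable_fun setT (f : borelT XS -> borelT YS))
  (fT_AT : AT fT) (mfT : measurable_fun setT (fT : borelT XT -> borelT YT))
  (fST_AT : forall f TX TY, AS f -> TXs TX -> TYs TY -> AT (fST f TX TY))
  (* Assumption 1: D is a metric on P(X_S) *)
  (D_ge0 : forall m1 m2, is_prob m1 -> is_prob m2 -> 0 <= D m1 m2)
  (D_sym : forall m1 m2, is_prob m1 -> is_prob m2 -> D m1 m2 = D m2 m1)
  (D_tri : forall m1 m2 m3, is_prob m1 -> is_prob m2 -> is_prob m3 ->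
     D m1 m3 <= D m1 m2 + D m2 m3)
  (D_eq0 : forall m1 m2, is_prob m1 -> is_prob m2 ->
     (D m1 m2 = 0 <-> forall A : set (borelT XS), measurable A -> m1 A = m2 A))
  (* E^O is an output transport risk *)
  (EO_ge0 : forall h, AT h -> 0 <= EO h)
  (EO_eq0 : forall f TX TY, AS f -> TXs TX -> TYs TY ->
     (EO (fST f TX TY) = 0 <->
      forall A : set (borelT YT), measurable A ->
        push PXT (fST f TX TY) A = push PXT fT A))
  (* properties of C *)
  (C00 : C 0 0 = 0)
  (C_ge0 : forall a b, 0 <= a -> 0 <= b -> 0 <= C a b)
  (C_mon1 : forall a a' b, a <= a' -> C a b <= C a' b)
  (C_mon2 : forall a b b', b <= b' -> C a b <= C a b')
  (LC_gt0 : 0 < LC)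
  (C_lip : forall a b a' b', `|C a b - C a' b'| <= LC * (`|a - a'| + `|b - b'|))
  (* source tasks S = (mu, f) in P(X_S) x A_S *)
  (Sset_sub : forall s, Sset s -> is_prob s.1 /\ AS s.2)
  (* uniform Lipschitz condition on T^Y_0 *)
  (TY_lip : forall TY, TYs TY -> forall (x1 x2 : XT) (y1 y2 : YS),
     `|TY (x1, y1) - TY (x2, y2)| <= L * (`|x1 - x2| + `|y1 - y2|))
  (* Wasserstein bound on E^O *)
  (L'_gt0 : 0 < L') (p_ge1 : 1 <= p)
  (EO_W : forall f1 f2 TX1 TX2 TY1 TY2,
     AS f1 -> AS f2 -> TXs TX1 -> TXs TX2 -> TYs TY1 -> TYs TY2 ->
     ((`|EO (fST f1 TX1 TY1) - EO (fST f2 TX2 TY2)|)%:E <=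
      L'%:E * poweR (Wasserstein p (push PXT (fST f1 TX1 TY1))
                                   (push PXT (fST f2 TX2 TY2))) p)%E)
  (M_gt0 : 0 < M) :
  forall s, Sset s -> forall eps : R, 0 < eps ->
  exists2 delta : R, 0 < delta &
    forall s', Sset s' -> D s.1 s'.1 + dM M s.2 s'.2 < delta ->
      `|transfer_risk C EO D PXT TXs TYs s - transfer_risk C EO D PXT TXs TYs s'| < eps.
Proof.
move=> s Ss eps eps0.
have [mu_prob ASf] := Sset_sub s Ss.
set a := `|L|.
have a0 : 0 <= a by exact: normr_ge0.
set k := LC * (L' * a + 1).
have k0 : 0 < k by rewrite mulr_gt0 // ltr_pwDr // mulr_ge0 // ltW.
set delta := Order.min M (Order.min (a + 1)^-1 (eps / (2 * k))).
have a1 : 0 < a + 1 by rewrite ltr_pwDr.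
have dpos : 0 < delta.
  by rewrite !lt_min M_gt0 invr_gt0 a1 divr_gt0 // mulr_gt0.
have dM' : delta <= M by rewrite ge_min lexx.
have da : delta <= (a + 1)^-1 by rewrite !ge_min lexx !orbT.
have de : delta <= eps / (2 * k) by rewrite !ge_min lexx !orbT.
exists delta => // s' Ss' hd.
have [mu'_prob ASf'] := Sset_sub s' Ss'.
have [dm0 dmb] := @dM_props _ XS YS M M_gt0 s.2 s'.2.
have dD0 := D_ge0 _ _ mu_prob mu'_prob.
have dmd : dM M s.2 s'.2 <= delta.
  by apply: ltW; apply: le_lt_trans hd; rewrite lerDr.
have dDd : D s.1 s'.1 <= delta.
  by apply: ltW; apply: le_lt_trans hd; rewrite lerDl.
have dmM : dM M s.2 s'.2 < M.
  by apply: lt_le_trans dM'; apply: le_lt_trans hd; rewrite lerDr.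
have hx := dmb dmM.
set dm := dM M s.2 s'.2 in dm0 dmd hx.
have adm0 : 0 <= a * dm by rewrite mulr_ge0.
have adm1 : a * dm <= 1.
  apply: (@le_trans _ _ (a * (a + 1)^-1)).
    by rewrite ler_wpM2l // (le_trans dmd).
  by rewrite ler_pdivrMr // mul1r lerDl.
apply: (@le_lt_trans _ _ (LC * (L' * (a * dm) + delta))).
  rewrite /transfer_risk.
  apply: inf_close.
  - by rewrite mulr_ge0 ?(ltW LC_gt0) // addr_ge0 ?(ltW dpos) // mulr_ge0 ?(ltW L'_gt0).
  - move=> i j Pi Qj; apply: C_ge0; first exact/EO_ge0/fST_AT.
    by apply: D_ge0 => //; apply: prob_push; exact: mTX.
  - move=> i j Pi Qj; apply: C_ge0; first exact/EO_ge0/fST_AT.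
    by apply: D_ge0 => //; apply: prob_push; exact: mTX.
  move=> i j Pi Qj.
  apply: le_trans (C_lip _ _ _ _) _.
  rewrite ler_pM2l // lerD //; last first.
    apply: le_trans dDd.
    apply: (@D_close _ _ D (@is_prob R XS)) => //.
    by apply: prob_push; exact: mTX.
  have hc : forall x, `|fST s.2 i j x - fST s'.2 i j x| <= a * dm.
    move=> x; rewrite /fST.
    apply: le_trans (TY_lip _ Qj _ _ _ _) _.
    rewrite subrr normr0 add0r.
    apply: (@le_trans _ _ (a * `|s.2 (i x) - s'.2 (i x)|)).
      by rewrite ler_wpM2r // ler_norm.
    by rewrite ler_wpM2l.
  have p0 : 0 < p by apply: lt_le_trans p_ge1.
  have hB := @W_bound _ _ _ PXT _ _ (@mfST _ _ _ _ _ _ _ _ (mAS _ ASf) (mTX _ Pi) (mTY _ Qj))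
                         (@mfST _ _ _ _ _ _ _ _ (mAS _ ASf') (mTX _ Pi) (mTY _ Qj)) p p0 _ adm0 hc.
  have hE := EO_W _ _ _ _ _ _ ASf ASf' Pi Pi Qj Qj.
  have hE2 : (`|EO (fST s.2 i j) - EO (fST s'.2 i j)| <= L' * (a * dm) `^ p).
    rewrite -lee_fin EFinM; apply: le_trans hE _.
    by apply: lee_wpmul2l => //; rewrite lee_fin ltW.
  apply: le_trans hE2 _.
  rewrite ler_pM2l //.
  have [->|adm_gt0] := eqVneq (a * dm) 0.
    by rewrite powR0 // gt_eqF.
  by apply: ge1r_powR => //; rewrite lt_neqAle eq_sym adm_gt0 adm0 adm1.
apply: (@le_lt_trans _ _ (k * delta)).
  rewrite /k -mulrA ler_wpM2l ?(ltW LC_gt0) // mulrDl mul1r lerD2r -mulrA ler_wpM2l ?(ltW L'_gt0) //.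
  by rewrite ler_wpM2l.
apply: (@le_lt_trans _ _ (k * (eps / (2 * k)))).
  by rewrite ler_wpM2l // ltW.
have -> : k * (eps / (2 * k)) = eps / 2 by field; rewrite gt_eqF.
lra.
Qed.
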